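(* For $\theta\in[0,\pi/2]$ let $a_1=\frac{1}{\sqrt3}\cos\theta$, $a_2=\frac{1}{\sqrt3}\sin\theta$, $a_3=\sqrt{2/3}$, and define the torus $y_\theta:[0,2\pi]^2\to S^5$, \[y_\theta(s,\hat s)=\big(a_1\cos(s+\hat s),a_1\sin(s+\hat s),a_2\cos(s-\hat s),a_2\sin(s-\hat s),a_3\cos\hat s,a_3\sin\hat s\big).\] Then, with $\rho=\sqrt{2+\sin^2 2\theta}\in[\sqrt2,\sqrt3]$, \[W(y_\theta)=6\pi^2\Big(\frac{2}{\rho}-\frac{3}{\rho^3}\Big),\] which is increasing in $\rho$ on $[\sqrt2,\sqrt3]$. The torus $y_{\pi/4}$ is (up to an isometry of $S^5$) the Ejiri torus, with $W(y_{\pi/4})=2\pi^2\sqrt3$, and it attains the maximum of $W$ in this family; consequently the Ejiri torus is unstable as a Willmore surface in $S^5$.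
   Context: For a closed immersed surface $x:M\to S^N$ with mean curvature vector $\vec H$ and Gauss curvature $K$, the Willmore functional is $W(x)=\int_M(|\vec H|^2-K+1)\,dM$. The Ejiri torus is $E:(s,\hat s)\mapsto\frac{1}{\sqrt3}\big(\cos\hat s\cos\sqrt3 s,\ \sin\hat s\cos\sqrt3 s,\ \cos\hat s\sin\sqrt3 s,\ \sin\hat s\sin\sqrt3 s,\ \sqrt2\cos\hat s,\ \sqrt2\sin\hat s\big)\in S^5$; it is a Willmore surface. *)

(* Defs.v *)
From Stdlib Require Import Reals Lra ClassicalEpsilon.
Open Scope R_scope.

(* The derivative of f at x (the value l with derivable_pt_lim f x l;
   an arbitrary value if f is not differentiable at x). *)
Definition Dr (f : R -> R) (x : R) : R :=
  epsilon (inhabits 0) (fun l => derivable_pt_lim f x l).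

(* Riemann integral of f over [a,b] (arbitrary if not integrable). *)
Definition RInt (f : R -> R) (a b : R) : R :=
  epsilon (inhabits 0)
    (fun l => exists pr : Riemann_integrable f a b, RiemannInt pr = l).

(* A point of R^(N+1) is a function nat -> R (coordinates 0..N). *)
Definition Pt := nat -> R.
Definition Surf := R -> R -> Pt.

Definition dot (N : nat) (u v : Pt) : R := sum_f_R0 (fun i => u i * v i) N.

Definition sum2 (f : nat -> R) : R := f 0%nat + f 1%nat.

Definition pd (i : nat) (f : R -> R -> R) (s t : R) : R :=
  match i with
  | 0%nat => Dr (fun s' => f s' t) s
  | _ => Dr (fun t' => f s t') t
  end.

Definition pdv (i : nat) (x : Surf) : Surf :=
  fun s t k => pd i (fun s' t' => x s' t' k) s t.

Section Geom.
Variable N : nat.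
Variable x : Surf.

Definition gm (i j : nat) (s t : R) : R := dot N (pdv i x s t) (pdv j x s t).
Definition detg (s t : R) : R := gm 0 0 s t * gm 1 1 s t - gm 0 1 s t * gm 1 0 s t.
Definition ginv (i j : nat) (s t : R) : R :=
  match i, j with
  | 0%nat, 0%nat => gm 1 1 s t / detg s t
  | 1%nat, 1%nat => gm 0 0 s t / detg s t
  | _, _ => - gm 0 1 s t / detg s t
  end.

(* component of v normal to the surface inside T_{x}S^N:
   remove the radial part (x is a unit vector) and the tangential part *)
Definition perp (s t : R) (v : Pt) : Pt :=
  let a := dot N v (x s t) in
  let c k := sum2 (fun l => ginv k l s t * dot N v (pdv l x s t)) in
  fun i => v i - a * x s t i - c 0%nat * pdv 0 x s t i - c 1%nat * pdv 1 x s t i.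

Definition II (i j : nat) (s t : R) : Pt := perp s t (pdv j (pdv i x) s t).

Definition Hvec (s t : R) : Pt :=
  fun k => / 2 * sum2 (fun i => sum2 (fun j => ginv i j s t * II i j s t k)).

Definition Gam (k i j : nat) (s t : R) : R :=
  / 2 * sum2 (fun l => ginv k l s t *
        (pd i (gm j l) s t + pd j (gm i l) s t - pd l (gm i j) s t)).

(* Riemann tensor: R(d_i,d_j) d_k = R^l_{ijk} d_l,
   R(X,Y) = nabla_X nabla_Y - nabla_Y nabla_X - nabla_[X,Y] *)
Definition Riem (l i j k : nat) (s t : R) : R :=
  pd i (Gam l j k) s t - pd j (Gam l i k) s t
  + sum2 (fun m => Gam l i m s t * Gam m j k s t - Gam l j m s t * Gam m i k s t).

Definition Kgauss (s t : R) : R :=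
  sum2 (fun l => gm 0 l s t * Riem l 0 1 1 s t) / detg s t.

Definition willmore_density (s t : R) : R :=
  (dot N (Hvec s t) (Hvec s t) - Kgauss s t + 1) * sqrt (detg s t).

End Geom.

(* Willmore functional of the closed surface parametrized (one-to-one modulo
   the periods) by x on the fundamental domain [0,L1] x [0,L2]. *)
Definition Willmore (N : nat) (L1 L2 : R) (x : Surf) : R :=
  RInt (fun s => RInt (fun t => willmore_density N x s t) 0 L2) 0 L1.

Definition Mat := nat -> nat -> R.
Definition matvec (N : nat) (A : Mat) (v : Pt) : Pt :=
  fun i => sum_f_R0 (fun j => A i j * v j) N.
Definition orthogonal (N : nat) (A : Mat) : Prop :=
  forall i j, (i <= N)%nat -> (j <= N)%nat ->
    sum_f_R0 (fun k => A k i * A k j) N = if Nat.eqb i j then 1 else 0.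

Definition congruent (N : nat) (x1 x2 : Surf) : Prop :=
  exists A : Mat, orthogonal N A /\
    (forall s t, exists s' t', forall i, (i <= N)%nat ->
        x1 s t i = matvec N A (x2 s' t') i) /\
    (forall s' t', exists s t, forall i, (i <= N)%nat ->
        x1 s t i = matvec N A (x2 s' t') i).

Definition a1 (th : R) : R := / sqrt 3 * cos th.
Definition a2 (th : R) : R := / sqrt 3 * sin th.
Definition a3 : R := sqrt (2 / 3).

Definition ytheta (th : R) : Surf := fun s sh i =>
  match i with
  | 0%nat => a1 th * cos (s + sh)
  | 1%nat => a1 th * sin (s + sh)
  | 2%nat => a2 th * cos (s - sh)
  | 3%nat => a2 th * sin (s - sh)
  | 4%nat => a3 * cos sh
  | 5%nat => a3 * sin sh
  | _ => 0
  end.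

Definition ejiri : Surf := fun s sh i =>
  / sqrt 3 *
  match i with
  | 0%nat => cos sh * cos (sqrt 3 * s)
  | 1%nat => sin sh * cos (sqrt 3 * s)
  | 2%nat => cos sh * sin (sqrt 3 * s)
  | 3%nat => sin sh * sin (sqrt 3 * s)
  | 4%nat => sqrt 2 * cos sh
  | 5%nat => sqrt 2 * sin sh
  | _ => 0
  end.

Definition rho (th : R) : R := sqrt (2 + (sin (2 * th)) ^ 2).

Definition Wformula (r : R) : R := 6 * PI ^ 2 * (2 / r - 3 / r ^ 3).

Definition Wfam (th : R) : R := Willmore 5 (2 * PI) (2 * PI) (ytheta th).

(* Main.v *)
Require Import Defs.
From Stdlib Require Import Reals Lra Lia Nsatz FunctionalExtensionality ClassicalEpsilon.
Open Scope R_scope.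

Lemma Dr_of f x l l' : derivable_pt_lim f x l -> l = l' -> Dr f x = l'.
Proof.
  intros H <-. unfold Dr.
  assert (E : exists l0, derivable_pt_lim f x l0) by (exists l; exact H).
  pose proof (epsilon_spec (inhabits 0) _ E) as H2.
  eapply uniqueness_limite; eauto.
Qed.

Lemma dlin a b x : derivable_pt_lim (fun y => a * y + b) x a.
Proof.
  assert (H := derivable_pt_lim_plus (mult_real_fct a id) (fct_cte b) x (a*1) 0
    (derivable_pt_lim_scal id a x 1 (derivable_pt_lim_id x)) (derivable_pt_lim_const b x)).
  replace (a*1+0) with a in H by ring. exact H.
Qed.

Lemma dcos_aff c a b x : derivable_pt_lim (fun y => c * cos (a * y + b)) x (- c * a * sin (a * x + b)).
Proof.
  replace (- c * a * sin (a * x + b)) with (c * (- sin (a*x+b) * a)) by ring.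
  apply derivable_pt_lim_scal.
  apply (derivable_pt_lim_comp (fun y => a * y + b) cos x a).
  apply dlin. apply derivable_pt_lim_cos.
Qed.

Lemma dsin_aff c a b x : derivable_pt_lim (fun y => c * sin (a * y + b)) x (c * a * cos (a * x + b)).
Proof.
  replace (c * a * cos (a * x + b)) with (c * (cos (a*x+b) * a)) by ring.
  apply derivable_pt_lim_scal.
  apply (derivable_pt_lim_comp (fun y => a * y + b) sin x a).
  apply dlin. apply derivable_pt_lim_sin.
Qed.

Lemma Dcos c a b f x : (forall y, f y = c * cos (a * y + b)) ->
  Dr f x = - c * a * sin (a * x + b).
Proof.
  intros Hf. replace f with (fun y => c * cos (a * y + b)) by (extensionality y; auto).
  eapply Dr_of; [apply dcos_aff | reflexivity].
Qed.
Lemma Dsin c a b f x : (forall y, f y = c * sin (a * y + b)) ->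
  Dr f x = c * a * cos (a * x + b).
Proof.
  intros Hf. replace f with (fun y => c * sin (a * y + b)) by (extensionality y; auto).
  eapply Dr_of; [apply dsin_aff | reflexivity].
Qed.
Lemma Dconst c f x : (forall y, f y = c) -> Dr f x = 0.
Proof.
  intros Hf. replace f with (fun _ : R => c) by (extensionality y; auto).
  eapply Dr_of; [apply derivable_pt_lim_const | reflexivity].
Qed.

Definition Ys (th : R) : Surf := fun s t i =>
  match i with
  | 0%nat => - a1 th * sin (s + t)
  | 1%nat => a1 th * cos (s + t)
  | 2%nat => - a2 th * sin (s - t)
  | 3%nat => a2 th * cos (s - t)
  | _ => 0 end.
Definition Yt (th : R) : Surf := fun s t i =>
  match i with
  | 0%nat => - a1 th * sin (s + t)
  | 1%nat => a1 th * cos (s + t)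
  | 2%nat => a2 th * sin (s - t)
  | 3%nat => - a2 th * cos (s - t)
  | 4%nat => - a3 * sin t
  | 5%nat => a3 * cos t
  | _ => 0 end.
Definition Yss (th : R) : Surf := fun s t i =>
  match i with
  | 0%nat => - a1 th * cos (s + t)
  | 1%nat => - a1 th * sin (s + t)
  | 2%nat => - a2 th * cos (s - t)
  | 3%nat => - a2 th * sin (s - t)
  | _ => 0 end.
Definition Yst (th : R) : Surf := fun s t i =>
  match i with
  | 0%nat => - a1 th * cos (s + t)
  | 1%nat => - a1 th * sin (s + t)
  | 2%nat => a2 th * cos (s - t)
  | 3%nat => a2 th * sin (s - t)
  | _ => 0 end.
Definition Ytt (th : R) : Surf := fun s t i =>
  match i with
  | 0%nat => - a1 th * cos (s + t)
  | 1%nat => - a1 th * sin (s + t)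
  | 2%nat => - a2 th * cos (s - t)
  | 3%nat => - a2 th * sin (s - t)
  | 4%nat => - a3 * cos t
  | 5%nat => - a3 * sin t
  | _ => 0 end.


Lemma Dcos' c g g' f x : (forall y, f y = c * cos (g y)) -> derivable_pt_lim g x g' ->
  Dr f x = - c * g' * sin (g x).
Proof.
  intros Hf Hg. replace f with (comp (fun u => c * cos u) g) by (extensionality y; auto).
  eapply Dr_of. apply derivable_pt_lim_comp. exact Hg.
  apply derivable_pt_lim_scal, derivable_pt_lim_cos. ring.
Qed.
Lemma Dsin' c g g' f x : (forall y, f y = c * sin (g y)) -> derivable_pt_lim g x g' ->
  Dr f x = c * g' * cos (g x).
Proof.
  intros Hf Hg. replace f with (comp (fun u => c * sin u) g) by (extensionality y; auto).
  eapply Dr_of. apply derivable_pt_lim_comp. exact Hg.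
  apply derivable_pt_lim_scal, derivable_pt_lim_sin. ring.
Qed.
Lemma dl1 b x : derivable_pt_lim (fun y => y + b) x 1.
Proof. pose proof (dlin 1 b x) as H. replace (fun y => y + b) with (fun y => 1 * y + b) by (extensionality y; ring). exact H. Qed.
Lemma dl2 b x : derivable_pt_lim (fun y => b + y) x 1.
Proof. pose proof (dlin 1 b x) as H. replace (fun y => b + y) with (fun y => 1 * y + b) by (extensionality y; ring). exact H. Qed.
Lemma dl3 b x : derivable_pt_lim (fun y => y - b) x 1.
Proof. pose proof (dlin 1 (-b) x) as H. replace (fun y => y - b) with (fun y => 1 * y + - b) by (extensionality y; ring). exact H. Qed.
Lemma dl4 b x : derivable_pt_lim (fun y => b - y) x (-1).
Proof. pose proof (dlin (-1) b x) as H. replace (fun y => b - y) with (fun y => -1 * y + b) by (extensionality y; ring). exact H. Qed.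
Lemma dl5 x : derivable_pt_lim (fun y => y) x 1.
Proof. apply derivable_pt_lim_id. Qed.

Ltac dlin_tac := first [apply dl1 | apply dl2 | apply dl3 | apply dl4 | apply dl5].
Ltac dtac :=
  first
  [ erewrite Dcos'; [ | intro; reflexivity | dlin_tac ]; cbv beta; ring
  | erewrite Dsin'; [ | intro; reflexivity | dlin_tac ]; cbv beta; ring
  | erewrite Dconst; [ | intro; reflexivity ]; ring ].

Lemma pdv0_y th : pdv 0 (ytheta th) = Ys th.
Proof.
  extensionality s; extensionality t; extensionality k.
  unfold pdv, pd. destruct k as [|[|[|[|[|[|k]]]]]]; simpl; dtac.
Qed.
Lemma pdv1_y th : pdv 1 (ytheta th) = Yt th.
Proof.
  extensionality s; extensionality t; extensionality k.
  unfold pdv, pd. destruct k as [|[|[|[|[|[|k]]]]]]; simpl; dtac.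
Qed.
Lemma pdv0_Ys th : pdv 0 (Ys th) = Yss th.
Proof.
  extensionality s; extensionality t; extensionality k.
  unfold pdv, pd. destruct k as [|[|[|[|[|[|k]]]]]]; simpl; dtac.
Qed.
Lemma pdv1_Ys th : pdv 1 (Ys th) = Yst th.
Proof.
  extensionality s; extensionality t; extensionality k.
  unfold pdv, pd. destruct k as [|[|[|[|[|[|k]]]]]]; simpl; dtac.
Qed.
Lemma pdv0_Yt th : pdv 0 (Yt th) = Yst th.
Proof.
  extensionality s; extensionality t; extensionality k.
  unfold pdv, pd. destruct k as [|[|[|[|[|[|k]]]]]]; simpl; dtac.
Qed.
Lemma pdv1_Yt th : pdv 1 (Yt th) = Ytt th.
Proof.
  extensionality s; extensionality t; extensionality k.
  unfold pdv, pd. destruct k as [|[|[|[|[|[|k]]]]]]; simpl; dtac.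
Qed.

Ltac trig_tac s t :=
  unfold dot; simpl;
  let h1 := fresh in let h2 := fresh in let h3 := fresh in
  pose proof (sin2_cos2 (s + t)) as h1; pose proof (sin2_cos2 (s - t)) as h2;
  pose proof (sin2_cos2 t) as h3; unfold Rsqr in h1, h2, h3;
  nsatz.

Section D.
Variables (th s t : R).
Notation y := (ytheta th s t).
Lemma d_yy : dot 5 y y = a1 th ^ 2 + a2 th ^ 2 + a3 ^ 2.
Proof. trig_tac s t. Qed.
Lemma d_ss_y : dot 5 (Yss th s t) y = - (a1 th ^ 2 + a2 th ^ 2).
Proof. trig_tac s t. Qed.
Lemma d_ss_s : dot 5 (Yss th s t) (Ys th s t) = 0.
Proof. trig_tac s t. Qed.
Lemma d_ss_t : dot 5 (Yss th s t) (Yt th s t) = 0.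
Proof. trig_tac s t. Qed.
Lemma d_st_y : dot 5 (Yst th s t) y = - (a1 th ^ 2 - a2 th ^ 2).
Proof. trig_tac s t. Qed.
Lemma d_st_s : dot 5 (Yst th s t) (Ys th s t) = 0.
Proof. trig_tac s t. Qed.
Lemma d_st_t : dot 5 (Yst th s t) (Yt th s t) = 0.
Proof. trig_tac s t. Qed.
Lemma d_tt_y : dot 5 (Ytt th s t) y = - (a1 th ^ 2 + a2 th ^ 2 + a3 ^ 2).
Proof. trig_tac s t. Qed.
Lemma d_tt_s : dot 5 (Ytt th s t) (Ys th s t) = 0.
Proof. trig_tac s t. Qed.
Lemma d_tt_t : dot 5 (Ytt th s t) (Yt th s t) = 0.
Proof. trig_tac s t. Qed.
Lemma d_s_s : dot 5 (Ys th s t) (Ys th s t) = a1 th ^ 2 + a2 th ^ 2.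
Proof. trig_tac s t. Qed.
Lemma d_s_t : dot 5 (Ys th s t) (Yt th s t) = a1 th ^ 2 - a2 th ^ 2.
Proof. trig_tac s t. Qed.
Lemma d_t_s : dot 5 (Yt th s t) (Ys th s t) = a1 th ^ 2 - a2 th ^ 2.
Proof. trig_tac s t. Qed.
Lemma d_t_t : dot 5 (Yt th s t) (Yt th s t) = a1 th ^ 2 + a2 th ^ 2 + a3 ^ 2.
Proof. trig_tac s t. Qed.
End D.

Lemma sqrt3_sq : sqrt 3 * sqrt 3 = 3.
Proof. apply sqrt_sqrt; lra. Qed.
Lemma sqrt3_pos : 0 < sqrt 3.
Proof. apply sqrt_lt_R0; lra. Qed.

Lemma a12 th : a1 th ^ 2 + a2 th ^ 2 = 1/3.
Proof.
  unfold a1, a2. pose proof (sin2_cos2 th) as H. unfold Rsqr in H.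
  pose proof sqrt3_sq. pose proof sqrt3_pos.
  field_simplify; [| lra]. rewrite <- H at 1.
  replace (sqrt 3 ^ 2) with 3 by (simpl; lra). field.
Qed.
Lemma a3sq : a3 ^ 2 = 2/3.
Proof. unfold a3. simpl. rewrite Rmult_1_r. apply sqrt_sqrt. lra. Qed.

Definition mm th := a1 th ^ 2 - a2 th ^ 2.
Definition dd th := 1/3 - mm th ^ 2.
Lemma dd_pos th : 0 < dd th.
Proof.
  unfold dd, mm. pose proof (a12 th).
  assert (0 <= a1 th ^ 2) by (apply pow2_ge_0). assert (0 <= a2 th ^ 2) by (apply pow2_ge_0).
  nra.
Qed.

Definition gmv th (i j : nat) : R :=
  match i, j with
  | 0%nat, 0%nat => 1/3
  | S _, S _ => 1
  | _, _ => mm th end.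

Lemma pdvS n x : pdv (S n) x = pdv 1 x.
Proof. reflexivity. Qed.

Lemma gm_val th i j s t : gm 5 (ytheta th) i j s t = gmv th i j.
Proof.
  unfold gm. pose proof (a12 th). pose proof a3sq.
  destruct i as [|i], j as [|j]; try change (pdv (S i)) with (pdv 1); try change (pdv (S j)) with (pdv 1);
   rewrite ?pdv0_y, ?pdv1_y; simpl gmv; unfold mm;
   rewrite ?d_s_s, ?d_s_t, ?d_t_s, ?d_t_t; lra.
Qed.

Lemma pd_const i f s t : (forall s t s' t', f s t = f s' t') -> pd i f s t = 0.
Proof.
  intros H. destruct i; unfold pd; apply (Dconst (f s t)); intro; apply H.
Qed.

Lemma Gam0 th k i j s t : Gam 5 (ytheta th) k i j s t = 0.
Proof.
  unfold Gam, sum2; cbv beta. rewrite !(pd_const _ (gm 5 (ytheta th) _ _)); try (intros; rewrite !gm_val; reflexivity).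
  ring.
Qed.

Lemma Riem0 th l i j k s t : Riem 5 (ytheta th) l i j k s t = 0.
Proof.
  unfold Riem, sum2; cbv beta. rewrite !(pd_const _ (Gam 5 (ytheta th) _ _ _)); try (intros; rewrite !Gam0; reflexivity).
  rewrite !Gam0. ring.
Qed.

Lemma K0 th s t : Kgauss 5 (ytheta th) s t = 0.
Proof. unfold Kgauss, sum2. rewrite !Riem0. unfold Rdiv. ring. Qed.

Lemma detg_val th s t : detg 5 (ytheta th) s t = dd th.
Proof. unfold detg. rewrite !gm_val. simpl. unfold dd. ring. Qed.

Definition Wv th s t k := Yss th s t k + /3 * ytheta th s t k
   - 2 * mm th * (Yst th s t k + mm th * ytheta th s t k).

Lemma Hvec_val th s t k : Hvec 5 (ytheta th) s t k = / (2 * dd th) * Wv th s t k.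
Proof.
  unfold Hvec, sum2, ginv, II, perp; cbv beta iota zeta.
  rewrite !gm_val, !detg_val.
  rewrite !pdv0_y, !pdv1_y, !pdv0_Ys, !pdv1_Ys, !pdv0_Yt, !pdv1_Yt.
  unfold sum2, ginv; cbv beta iota.
  rewrite !gm_val, !detg_val, !pdv0_y, !pdv1_y.
  rewrite ?d_ss_y, ?d_ss_s, ?d_ss_t, ?d_st_y, ?d_st_s, ?d_st_t, ?d_tt_y, ?d_tt_s, ?d_tt_t.
  rewrite a12, a3sq. simpl gmv. pose proof (dd_pos th). unfold Wv. fold (mm th).
  destruct k as [|[|[|[|[|[|k]]]]]]; simpl; field; lra.
Qed.

Lemma dot_scal N u w c : (forall k, u k = c * w k) -> dot N u u = c ^ 2 * dot N w w.
Proof.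
  intros H. unfold dot. induction N; simpl; rewrite !H; [ring|]. rewrite IHN. ring.
Qed.


Lemma dot_lin3 N (A B C : Pt) al be ga :
  dot N (fun k => al * A k + be * B k + ga * C k) (fun k => al * A k + be * B k + ga * C k) =
  al^2 * dot N A A + be^2 * dot N B B + ga^2 * dot N C C + 2*al*be*dot N A B
  + 2*al*ga*dot N A C + 2*be*ga*dot N B C.
Proof. unfold dot. induction N; simpl; [ring|]. rewrite IHN. ring. Qed.

Lemma d_ss_ss th s t : dot 5 (Yss th s t) (Yss th s t) = a1 th ^ 2 + a2 th ^ 2.
Proof. trig_tac s t. Qed.
Lemma d_st_st th s t : dot 5 (Yst th s t) (Yst th s t) = a1 th ^ 2 + a2 th ^ 2.
Proof. trig_tac s t. Qed.
Lemma d_ss_st th s t : dot 5 (Yss th s t) (Yst th s t) = a1 th ^ 2 - a2 th ^ 2.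
Proof. trig_tac s t. Qed.

Lemma WW th s t : dot 5 (Wv th s t) (Wv th s t) = 2/9 - 4 * mm th ^ 2 / 3 - 4 * mm th ^ 4.
Proof.
  replace (Wv th s t) with (fun k => 1 * Yss th s t k + (-2 * mm th) * Yst th s t k
      + (/3 - 2 * mm th ^ 2) * ytheta th s t k)
    by (extensionality k; unfold Wv; ring).
  rewrite dot_lin3, d_ss_ss, d_st_st, d_yy, d_ss_st, d_ss_y, d_st_y, a12, a3sq.
  fold (mm th). field.
Qed.
Lemma HH th s t : dot 5 (Hvec 5 (ytheta th) s t) (Hvec 5 (ytheta th) s t) =
  (/ (2 * dd th)) ^ 2 * (2/9 - 4 * mm th ^ 2 / 3 - 4 * mm th ^ 4).
Proof. rewrite <- (WW th s t). apply dot_scal. apply Hvec_val. Qed.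

Lemma RInt_const c a b : RInt (fun _ => c) a b = c * (b - a).
Proof.
  unfold RInt.
  assert (E : exists l, exists pr : Riemann_integrable (fun _ => c) a b, RiemannInt pr = l).
  { exists (c * (b - a)). exists (RiemannInt_P14 a b c). apply RiemannInt_P15. }
  destruct (epsilon_spec (inhabits 0) _ E) as [pr Hpr]. rewrite <- Hpr.
  rewrite (RiemannInt_P5 pr (RiemannInt_P14 a b c)). apply RiemannInt_P15.
Qed.

Definition Dth th := ((/ (2 * dd th)) ^ 2 * (2/9 - 4 * mm th ^ 2 / 3 - 4 * mm th ^ 4) + 1) * sqrt (dd th).

Lemma dens th s t : willmore_density 5 (ytheta th) s t = Dth th.
Proof. unfold willmore_density. rewrite HH, K0, detg_val. unfold Dth. ring. Qed.

Lemma Wfam_val th : Wfam th = 4 * PI ^ 2 * Dth th.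
Proof.
  unfold Wfam, Willmore.
  replace (fun s => RInt (fun t => willmore_density 5 (ytheta th) s t) 0 (2 * PI))
    with (fun _ : R => Dth th * (2 * PI - 0)).
  2:{ extensionality s. replace (fun t => willmore_density 5 (ytheta th) s t) with (fun _ : R => Dth th)
      by (extensionality t; symmetry; apply dens). symmetry; apply RInt_const. }
  rewrite RInt_const. ring.
Qed.

Lemma rho_val th : rho th = 3 * sqrt (dd th).
Proof.
  unfold rho.
  assert (E : 2 + sin (2 * th) ^ 2 = 9 * dd th).
  { unfold dd, mm, a1, a2.
    pose proof sqrt3_sq. pose proof sqrt3_pos. pose proof (sin2_cos2 th) as Hsc. unfold Rsqr in Hsc.
    rewrite sin_2a. field_simplify; [|lra].
    replace (sqrt 3 ^ 4) with 9 by (simpl; nra). replace (sqrt 3 ^ 2) with 3 by (simpl; nra).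
    replace (sin th ^ 2) with (1 - cos th ^ 2) by (simpl; lra).
    replace (sin th ^ 4) with ((1 - cos th ^ 2)^2) by (simpl; nra). field. }
  rewrite E, sqrt_mult_alt by lra.
  replace 9 with (3 * 3) by ring. rewrite sqrt_square by lra. reflexivity.
Qed.

Lemma Wfam_formula th : Wfam th = Wformula (rho th).
Proof.
  rewrite Wfam_val, rho_val. unfold Wformula, Dth.
  pose proof (dd_pos th) as Hd.
  pose proof (sqrt_sqrt (dd th) (Rlt_le _ _ Hd)) as Hq.
  pose proof (sqrt_lt_R0 _ Hd) as Hqp.
  set (q := sqrt (dd th)) in *.
  assert (Hm : mm th ^ 2 = 1/3 - q * q) by (unfold dd in Hq; lra).
  replace (mm th ^ 4) with ((mm th ^ 2) ^ 2) by ring. rewrite Hm, <- Hq.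
  field. lra.
Qed.

Lemma rho_range th : sqrt 2 <= rho th <= sqrt 3.
Proof.
  unfold rho. pose proof (pow2_ge_0 (sin (2 * th))).
  assert (sin (2*th) ^ 2 <= 1).
  { pose proof (sin2_cos2 (2*th)). unfold Rsqr in *. pose proof (pow2_ge_0 (cos (2*th))). simpl in *. lra. }
  split; apply sqrt_le_1_alt; lra.
Qed.

Lemma sqrt2_pos : 0 < sqrt 2.
Proof. apply sqrt_lt_R0; lra. Qed.

Lemma Wmono r1 r2 : sqrt 2 <= r1 -> r1 < r2 -> r2 <= sqrt 3 -> Wformula r1 < Wformula r2.
Proof.
  intros H1 H2 H3. unfold Wformula.
  pose proof sqrt2_pos. pose proof sqrt3_sq.
  assert (0 < r1) by lra. assert (0 < r2) by lra.
  assert (r2 * r2 <= 3) by nra. assert (r1 * r2 <= 3) by nra. assert (r1 * r1 <= 3) by nra.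
  assert (0 < PI) by apply PI_RGT_0.
  apply Rmult_lt_compat_l. nra.
  assert (Hk : 2 / r2 - 3 / r2 ^ 3 - (2 / r1 - 3 / r1 ^ 3) =
    (r2 - r1) * (3 * (r1*r1 + r1*r2 + r2*r2) - 2 * (r1*r2) * (r1*r2)) / (r1^3 * r2^3)).
  { field. lra. }
  assert (0 < (r2 - r1) * (3 * (r1*r1 + r1*r2 + r2*r2) - 2 * (r1*r2) * (r1*r2)) / (r1^3 * r2^3)).
  { apply Rdiv_lt_0_compat. apply Rmult_lt_0_compat. lra. nra.
    apply Rmult_lt_0_compat; apply pow_lt; lra. }
  lra.
Qed.

Lemma rho_PI4 : rho (PI / 4) = sqrt 3.
Proof.
  unfold rho. replace (2 * (PI / 4)) with (PI / 2) by field. rewrite sin_PI2. f_equal. ring.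
Qed.

Lemma W_PI4 : Wfam (PI / 4) = 2 * PI ^ 2 * sqrt 3.
Proof.
  rewrite Wfam_formula, rho_PI4. unfold Wformula. pose proof sqrt3_sq. pose proof sqrt3_pos.
  replace (sqrt 3 ^ 3) with (3 * sqrt 3) by (simpl; nra).
  transitivity (6 * PI ^ 2 / sqrt 3). field. lra.
  apply (Rmult_eq_reg_r (sqrt 3)); [| lra].
  unfold Rdiv. rewrite Rmult_assoc, Rinv_l by lra. replace (2 * PI ^ 2 * sqrt 3 * sqrt 3) with (2 * PI ^ 2 * (sqrt 3 * sqrt 3)) by ring. rewrite H. ring.
Qed.

Lemma W_max th : Wfam th <= Wfam (PI / 4).
Proof.
  rewrite !Wfam_formula, rho_PI4. destruct (rho_range th) as [H1 H2].
  destruct (Req_dec (rho th) (sqrt 3)) as [E|E].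
  - rewrite E; lra.
  - left. apply Wmono; lra.
Qed.

Definition Amat : Mat := fun i j =>
  match i, j with
  | 0%nat, 0%nat => / sqrt 2 | 0%nat, 3%nat => - / sqrt 2
  | 1%nat, 1%nat => / sqrt 2 | 1%nat, 2%nat => / sqrt 2
  | 2%nat, 0%nat => / sqrt 2 | 2%nat, 3%nat => / sqrt 2
  | 3%nat, 1%nat => - / sqrt 2 | 3%nat, 2%nat => / sqrt 2
  | 4%nat, 4%nat => 1 | 5%nat, 5%nat => 1
  | _, _ => 0 end.

Lemma sqrt2_sq : sqrt 2 * sqrt 2 = 2.
Proof. apply sqrt_sqrt; lra. Qed.

Lemma Amat_orth : orthogonal 5 Amat.
Proof.
  intros i j Hi Hj. pose proof sqrt2_sq. pose proof sqrt2_pos.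
  assert (Hh : 2 * (/ sqrt 2 * / sqrt 2) = 1) by (rewrite <- Rinv_mult, H; field).
  destruct i as [|[|[|[|[|[|i]]]]]]; try lia; destruct j as [|[|[|[|[|[|j]]]]]]; try lia;
  unfold Amat; simpl; set (h := / sqrt 2) in *; clearbody h; nsatz.
Qed.

Lemma a3_val : a3 = sqrt 2 / sqrt 3.
Proof. unfold a3. apply sqrt_div_alt. lra. Qed.



Lemma cong_pt s' t : forall i, (i <= 5)%nat ->
  ytheta (PI / 4) s' t i = matvec 5 Amat (ejiri (s' / sqrt 3) t) i.
Proof.
  intros i Hi. pose proof sqrt2_pos. pose proof sqrt3_pos.
  assert (E : sqrt 3 * (s' / sqrt 3) = s') by (field; lra).
  unfold matvec, ejiri, ytheta, a1, a2. rewrite a3_val.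
  destruct i as [|[|[|[|[|[|i]]]]]]; try lia; unfold Amat; simpl; rewrite E;
  rewrite ?cos_PI4, ?sin_PI4, ?cos_plus, ?sin_plus, ?cos_minus, ?sin_minus; field; lra.
Qed.

Lemma congr : congruent 5 (ytheta (PI / 4)) ejiri.
Proof.
  exists Amat. split; [apply Amat_orth|]. split.
  - intros s t. exists (s / sqrt 3), t. apply cong_pt.
  - intros s' t'. exists (s' * sqrt 3), t'. intros i Hi.
    replace s' with (s' * sqrt 3 / sqrt 3) at 2 by (pose proof sqrt3_pos; field; lra).
    apply cong_pt; auto.
Qed.
From Coquelicot Require Coquelicot.
Module CQ.
Import Coquelicot.Coquelicot.
Definition F1 x := 6*PI^2*(-1/(sqrt(2+x))^3 + 9/(2*(sqrt(2+x))^5)).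
Definition kk th := 4*sin(2*th)*cos(2*th).
Definition Wp th := F1 (sin (2*th) ^ 2) * kk th.

Lemma pos2 th : 0 < 2 + sin (2 * th) ^ 2.
Proof. pose proof (pow2_ge_0 (sin (2*th))). lra. Qed.

Lemma derW th : derivable_pt_lim (fun x => Wformula (rho x)) th (Wp th).
Proof.
  apply is_derive_Reals. unfold Wformula, rho.
  pose proof (pos2 th) as P. simpl in P.
  auto_derive.
  - pose proof (sqrt_lt_R0 _ P). set (r := sqrt _) in *. repeat split; try lra; apply Rgt_not_eq; repeat apply Rmult_lt_0_compat; lra.
  - unfold Wp, F1, kk. simpl.
    pose proof (sqrt_lt_R0 _ P).
    set (r := sqrt (2 + sin (2 * th) * (sin (2 * th) * 1))) in *. field. lra.
Qed.

Lemma exF1 : ex_derive (fun th => F1 (sin (2*th) ^ 2)) (PI/4).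
Proof.
  unfold F1. pose proof (pos2 (PI/4)) as P. simpl in P.
  auto_derive. pose proof (sqrt_lt_R0 _ P). set (r := sqrt _) in *.
  repeat split; try lra; apply Rgt_not_eq; repeat apply Rmult_lt_0_compat; lra.
Qed.

Lemma derkk : derivable_pt_lim kk (PI/4) (8 * (cos (2*(PI/4)) ^ 2 - sin (2*(PI/4)) ^ 2)).
Proof. apply is_derive_Reals. unfold kk. auto_derive; auto. simpl. ring. Qed.

Lemma derWp : exists c, derivable_pt_lim Wp (PI/4) c /\ c < 0.
Proof.
  destruct exF1 as [lg Hlg]. apply is_derive_Reals in Hlg.
  pose proof (derivable_pt_lim_mult _ _ _ _ _ Hlg derkk) as H.
  eexists. split.
  - change Wp with (mult_fct (fun th => F1 (sin (2*th) ^ 2)) kk). exact H.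
  - unfold kk, F1. replace (2 * (PI / 4)) with (PI / 2) by field.
    rewrite sin_PI2, cos_PI2.
    replace (2 + 1 ^ 2) with 3 by ring.
    pose proof (sqrt_lt_R0 3 ltac:(lra)) as Hp. pose proof (sqrt_sqrt 3 ltac:(lra)) as Hs.
    replace (sqrt 3 ^ 3) with (3 * sqrt 3) by (replace (sqrt 3 ^ 3) with ((sqrt 3 * sqrt 3) * sqrt 3) by ring; rewrite Hs; ring).
    replace (sqrt 3 ^ 5) with (9 * sqrt 3) by (replace (sqrt 3 ^ 5) with ((sqrt 3 * sqrt 3) * (sqrt 3 * sqrt 3) * sqrt 3) by ring; rewrite Hs; ring).
    assert (0 < PI) by apply PI_RGT_0.
    replace (lg * (4 * 1 * 0) + 6 * PI ^ 2 * (-1 / (3 * sqrt 3) + 9 / (2 * (9 * sqrt 3))) * (8 * (0 ^ 2 - 1 ^ 2)))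
      with (- (8 * PI ^ 2) / sqrt 3) by (field; lra).
    apply Ropp_lt_cancel. unfold Rdiv. rewrite Ropp_mult_distr_l, Ropp_involutive, Ropp_0.
    apply Rmult_lt_0_compat; [nra | apply Rinv_0_lt_compat; lra].
Qed.
End CQ.
Theorem proposition5p1 :
  (* W(y_theta) = 6 pi^2 (2/rho - 3/rho^3), with rho in [sqrt 2, sqrt 3] *)
  (forall th, 0 <= th <= PI / 2 ->
     sqrt 2 <= rho th <= sqrt 3 /\ Wfam th = Wformula (rho th)) /\
  (* this expression is increasing in rho on [sqrt 2, sqrt 3] *)
  (forall r1 r2, sqrt 2 <= r1 -> r1 < r2 -> r2 <= sqrt 3 ->
     Wformula r1 < Wformula r2) /\
  (* y_{pi/4} is the Ejiri torus up to an isometry of S^5 *)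
  congruent 5 (ytheta (PI / 4)) ejiri /\
  (* its Willmore energy *)
  Wfam (PI / 4) = 2 * PI ^ 2 * sqrt 3 /\
  (* it attains the maximum of W in the family *)
  (forall th, 0 <= th <= PI / 2 -> Wfam th <= Wfam (PI / 4)) /\
  (* instability: along the variation theta |-> y_theta of y_{pi/4}
     the second variation of W is negative *)
  (exists W' : R -> R,
     (forall th, 0 < th < PI / 2 -> derivable_pt_lim Wfam th (W' th)) /\
     exists c, derivable_pt_lim W' (PI / 4) c /\ c < 0).
Proof.
  split; [intros th _; split; [apply rho_range | apply Wfam_formula]|].
  split; [exact Wmono|].
  split; [exact congr|].
  split; [exact W_PI4|].
  split; [intros th _; apply W_max|].
  exists CQ.Wp. split.
  - intros th _. replace Wfam with (fun x => Wformula (rho x))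
      by (extensionality x; symmetry; apply Wfam_formula).
    apply CQ.derW.
  - exact CQ.derWp.
Qed.
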